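(* If $G=(U,E)$ is a binary tree, then there exists a category system $\mathcal S\subset 2^U$ such that $(G,\mathcal S)$ is shattered and internally connected and $\operatorname{memdim}(\mathcal S)=O(\operatorname{diam}(G)^2)$.
   Context: A binary tree here is a tree that can be rooted so that every vertex has at most two children. For $u\in U$ let $\mathrm{cat}(u)=\{C\in\mathcal S: u\in C\}$; $\operatorname{memdim}(\mathcal S)=\max_{u\in U}|\mathrm{cat}(u)|$. $\operatorname{diam}(G)$ is the maximum shortest-path distance between two vertices of $G$. $N(s)$ is the neighbor set of $s$. $(G,\mathcal S)$ is internally connected if for every $C\in\mathcal S$ the subgraph of $G$ induced by $C$ is connected. $(G,\mathcal S)$ is shattered if for all $s\neq t$ in $U$ there exist $u\in N(s)$ and $C\in\mathcal S$ with $u,t\in C$ and $s\notin C$ (possibly $u=t$). *)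

(* Defs.v *)
From mathcomp Require Import all_boot.
Set Implicit Arguments. Unset Strict Implicit. Unset Printing Implicit Defensive.

Section Graphs.
Variable T : finType.
Implicit Types (e : rel T) (S : {set {set T}}).

Definition simple_graph e := symmetric e /\ irreflexive e.

Definition walk_len e (n : nat) (x y : T) : bool :=
  [exists p : n.-tuple T, path e x p && (last x p == y)].

(* shortest-path distance (for connected graphs; every shortest path has
   fewer than #|T| edges) *)
Definition dist e (x y : T) : nat :=
  find (fun n => walk_len e n x y) (iota 0 #|T|).

Definition diam e : nat := \max_(x : T) \max_(y : T) dist e x y.

Definition graph_connected e := forall x y : T, connect e x y.

Definition acyclic e := forall c : seq T, ~~ [&& cycle e c, uniq c & 2 < size c].

Definition is_tree e := [/\ simple_graph e, graph_connected e & acyclic e].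

Definition children e (r v : T) : {set T} :=
  [set w | e v w && (dist e r w == (dist e r v).+1)].

Definition binary_tree e :=
  is_tree e /\ exists r : T, forall v : T, #|children e r v| <= 2.

Definition nbhd e (s : T) : {set T} := [set u | e s u].

Definition cat S (u : T) : {set {set T}} := [set C in S | u \in C].

Definition memdim S : nat := \max_(u : T) #|cat S u|.

Definition induced_connected e (C : {set T}) :=
  forall x y, x \in C -> y \in C ->
    connect [rel a b | e a b && (a \in C) && (b \in C)] x y.

Definition internally_connected e S :=
  forall C, C \in S -> induced_connected e C.

Definition shattered e S :=
  forall s t : T, s != t ->
    exists u, exists C, [/\ u \in nbhd e s, C \in S, u \in C, t \in C & s \notin C].

End Graphs.

(* Main.v *)
Require Import Defs.
From mathcomp Require Import all_boot.
From mathcomp Require Import zify.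
Set Implicit Arguments. Unset Strict Implicit. Unset Printing Implicit Defensive.

Section Aux.
Variable T : finType.
Variable e : rel T.
Hypothesis esym : symmetric e.
Hypothesis econn : graph_connected e.
Variable r : T.

Lemma walkP n x y : reflect (exists p : seq T, [/\ size p = n, path e x p & last x p = y]) (walk_len e n x y).
Proof.
apply: (iffP existsP) => [[p /andP[Hp /eqP Hl]] | [p [Hs Hp Hl]]].
  by exists (val p); rewrite size_tuple.
have Hs' : size p == n by apply/eqP.
by exists (Tuple Hs'); rewrite /= Hp Hl eqxx.
Qed.

Local Notation d := (dist e r).

Lemma d_props x : d x < #|T| /\ walk_len e (d x) r x.
Proof.
have /connectP[p Hp ->] := econn r x.
case/shortenP: Hp => q Hq Hu _.
have Hsz : size q < #|T|.
  have := max_card (mem (r :: q)); rewrite (card_uniqP Hu) /=; by [].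
have Hw : walk_len e (size q) r (last r q) by apply/walkP; exists q.
have Hhas : has (fun n => walk_len e n r (last r q)) (iota 0 #|T|).
  by apply/hasP; exists (size q); rewrite ?mem_iota.
split; first by move: Hhas; rewrite has_find size_iota.
have := nth_find 0 Hhas; rewrite nth_iota //; move: Hhas; rewrite has_find size_iota //.
Qed.

Lemma d_min n x : walk_len e n r x -> d x <= n.
Proof.
move=> Hw; case: (ltnP n #|T|) => Hn; last first.
  by have [H _] := d_props x; apply: ltnW; apply: leq_trans H Hn.
rewrite leqNgt; apply/negP => Hlt.
have := before_find 0 Hlt; rewrite nth_iota // add0n Hw; by [].
Qed.

Lemma d0 x : d x = 0 -> x = r.
Proof.
move=> H; have [_ /walkP[p [Hs _ Hl]]] := d_props x.
by move: Hs Hl; rewrite H; case: p.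
Qed.

Lemma d_edge x y : e y x -> d x <= (d y).+1.
Proof.
move=> Hyx; have [_ /walkP[q [Hs Hp Hl]]] := d_props y.
apply: d_min; apply/walkP; exists (rcons q x).
by rewrite size_rcons Hs rcons_path Hp Hl Hyx last_rcons.
Qed.

Lemma d_par x : 0 < d x -> exists y, e x y && ((d y).+1 == d x).
Proof.
move=> Hx; have [_ /walkP[p [Hs Hp Hl]]] := d_props x.
move: Hs Hp Hl; case/lastP: p => [|q z]; first by move=> H; rewrite -H in Hx.
rewrite size_rcons rcons_path last_rcons => Hs /andP[Hq Hz] Hzx; subst z.
exists (last r q); rewrite esym Hz /=.
have H1 : d (last r q) <= size q by apply: d_min; apply/walkP; exists q.
have H2 := d_edge Hz.
apply/eqP; lia.
Qed.

Definition par x := odflt x [pick y | e x y && ((d y).+1 == d x)].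

Lemma par_pos x : 0 < d x -> e x (par x) && ((d (par x)).+1 == d x).
Proof.
move=> Hx; rewrite /par; case: pickP => [y H //|H].
by have [y Hy] := d_par Hx; rewrite H in Hy.
Qed.

Lemma d_par_eq x : d (par x) = (d x).-1.
Proof.
case: (posnP (d x)) => Hx.
  rewrite /par; case: pickP => [y /andP[_ /eqP H]|_ /=]; first by rewrite Hx in H.
  by rewrite Hx.
by have /andP[_ /eqP <-] := par_pos Hx.
Qed.

Lemma par0 x : d x = 0 -> par x = x.
Proof.
move=> Hx; rewrite /par; case: pickP => [y /andP[_ /eqP H]|_ //]; by rewrite Hx in H.
Qed.

Lemma d_iter k x : d (iter k par x) = d x - k.
Proof. elim: k => [|k IH]; first by rewrite subn0. by rewrite iterS d_par_eq IH; lia. Qed.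

Definition anc w x := (d w <= d x) && (w == iter (d x - d w) par x).

Lemma anc_refl x : anc x x.
Proof. by rewrite /anc leqnn subnn eqxx. Qed.

Lemma anc_iter k x : k <= d x -> anc (iter k par x) x.
Proof.
move=> Hk; rewrite /anc d_iter leq_subr /=.
by have -> : d x - (d x - k) = k by lia.
Qed.

Lemma anc_root x : anc r x.
Proof.
have H : d (iter (d x) par x) = 0 by rewrite d_iter subnn.
by rewrite -(d0 H); apply: anc_iter.
Qed.

Lemma anc_eq w x : anc w x -> d w = d x -> w = x.
Proof. by case/andP=> _ /eqP E H; rewrite E H subnn. Qed.

Lemma anc_par w x : anc w x -> w != x -> anc w (par x).
Proof.
case/andP=> H1 /eqP H2 Hne.
have Hlt : d w < d x.
  rewrite ltn_neqAle H1 andbT; apply/negP => /eqP E; move: Hne; by rewrite H2 E subnn eqxx.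
rewrite /anc d_par_eq; apply/andP; split; first by lia.
apply/eqP; rewrite {1}H2.
have -> : d x - d w = (d x).-1 - d w + 1 by lia.
by rewrite addn1 iterSr.
Qed.

Lemma anc_of_par a x : anc a (par x) -> 0 < d x -> anc a x.
Proof.
case/andP; rewrite d_par_eq => H1 /eqP H2 Hx.
rewrite /anc; apply/andP; split; first by lia.
have -> : d x - d a = ((d x).-1 - d a).+1 by lia.
by rewrite iterSr -H2.
Qed.

Definition R (C : {set T}) := [rel a b | e a b && (a \in C) && (b \in C)].

Lemma closed_conn (C : {set T}) w :
  (forall x, x \in C -> anc w x) ->
  (forall x, x \in C -> x != w -> par x \in C) ->
  induced_connected e C.
Proof.
move=> Hanc Hcl.
have Rsym : symmetric (R C).
  by move=> a b /=; rewrite esym; case: (a \in C); case: (b \in C); rewrite ?andbT ?andbF.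
have key : forall n x, x \in C -> d x - d w = n -> connect (R C) x w.
  elim=> [|n IH] x Hx Hn.
    have Ha := Hanc x Hx; move: (Ha) => /andP[H1 _].
    by rewrite (anc_eq Ha); last by lia.
  have Hne : x != w.
    by apply/negP => /eqP E; rewrite E subnn in Hn.
  have Hp := Hcl x Hx Hne.
  have Hpos : 0 < d x by lia.
  apply: connect_trans (IH (par x) Hp _).
    apply: connect1; rewrite /= Hx Hp !andbT.
    by have /andP[] := par_pos Hpos.
  rewrite d_par_eq; lia.
move=> x y Hx Hy.
apply: connect_trans (key _ x Hx erefl) _.
by rewrite (sym_connect_sym Rsym); apply: key _ y Hy erefl.
Qed.


Definition Z u := [set x | anc u x].
Definition Y a k := [set x | anc (par a) x && ~~ (anc a x && (k <= d x))].

Lemma anc_lt w x : anc w x -> w != x -> d w < d x.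
Proof.
move=> Ha Hne; move: (Ha) => /andP[H1 _]; rewrite ltn_neqAle H1 andbT.
by apply/negP => /eqP E; move: Hne; rewrite (anc_eq Ha E) eqxx.
Qed.

Lemma Z_conn u : induced_connected e (Z u).
Proof.
apply: (@closed_conn _ u) => x; rewrite /Z !inE //.
by move=> Ha Hne; apply: anc_par => //; rewrite eq_sym.
Qed.

Lemma Y_conn a k : induced_connected e (Y a k).
Proof.
apply: (@closed_conn _ (par a)) => x; rewrite /Y !inE; first by case/andP.
case/andP=> Ha Hn Hne; rewrite anc_par //=; last by rewrite eq_sym.
have Hne2 : par a != x by rewrite eq_sym.
have Hpos : 0 < d x by have := anc_lt Ha Hne2; lia.
apply/negP=> /andP[H1 H2]; move: Hn; rewrite (anc_of_par H1 Hpos) /=.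
by rewrite d_par_eq in H2; apply/negP; lia.
Qed.

Lemma e_par x : 0 < d x -> e x (par x).
Proof. by move=> H; have /andP[] := par_pos H. Qed.

Lemma shatA s t : anc s t -> s != t ->
  exists u, [/\ e s u, u \in Z u, t \in Z u & s \notin Z u].
Proof.
move=> Ha Hne; have Hlt := anc_lt Ha Hne.
set u := iter (d t - d s).-1 par t.
have Hdu : d u = (d s).+1 by rewrite /u d_iter; lia.
have Hpu : par u = s.
  move: Ha => /andP[_ /eqP ->]; rewrite /u -iterS prednK //; lia.
exists u; rewrite /Z !inE anc_refl; split => //.
- by rewrite esym -{1}Hpu; apply: e_par; rewrite Hdu.
- by rewrite /u; apply: anc_iter; lia.
- by apply/negP => /andP[H _]; move: H; rewrite Hdu; lia.
Qed.

Lemma shatB s t : ~~ anc s t ->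
  e s (par s) /\ exists a, [/\ par s \in Y a (d s), t \in Y a (d s) & s \notin Y a (d s)].
Proof.
move=> Hna.
have Hs : 0 < d s.
  case: (posnP (d s)) => // /d0 E; by move: Hna; rewrite E anc_root.
have exP : exists i, anc (iter i par s) t.
  exists (d s); have H : d (iter (d s) par s) = 0 by rewrite d_iter subnn.
  by rewrite (d0 H) anc_root.
case: (ex_minnP exP) => i0 Hi0 Hmin.
have Hi0pos : 0 < i0 by case: i0 Hi0 {Hmin} => //= H; rewrite H in Hna.
have Hi0le : i0 <= d s.
  apply: Hmin; have H : d (iter (d s) par s) = 0 by rewrite d_iter subnn.
  by rewrite (d0 H) anc_root.
set a := iter i0.-1 par s.
have Hpa : par a = iter i0.-1 par (par s).
  by rewrite /a -iterS -iterSr.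
have Hnat : ~~ anc a t.
  apply/negP => H; have := Hmin _ H; lia.
split; first exact: e_par.
exists a; rewrite /Y !inE; split.
- rewrite Hpa anc_iter /=; last by rewrite d_par_eq; lia.
  rewrite d_par_eq; apply/negP => /andP[_ H]; lia.
- rewrite (negbTE Hnat) /= andbT.
  by rewrite /a -iterS prednK.
- rewrite negb_and negbK leqnn andbT.
  by apply/orP; right; apply: anc_iter; lia.
Qed.


Section Count.
Hypothesis Hbin : forall v, #|children e r v| <= 2.
Variable D : nat.
Hypothesis HD : forall x, d x <= D.

Definition W v := [set w | anc w v].
Definition A v := [set a | anc (par a) v].

Lemma W_card v : #|W v| <= D.+1.
Proof.
apply: leq_trans (_ : #|[set iter (val i) par v | i : 'I_D.+1]| <= _); last first.
  by apply: leq_trans (leq_imset_card _ _) _; rewrite card_ord.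
apply: subset_leq_card; apply/subsetP => w; rewrite /W inE => /andP[H1 /eqP H2].
have Hlt : d v - d w < D.+1 by have := HD v; lia.
by apply/imsetP; exists (Ordinal Hlt).
Qed.

Definition fch (wi : T * 'I_3) := nth wi.1 (wi.1 :: enum (children e r wi.1)) wi.2.

Lemma A_card v : #|A v| <= #|W v| * 3.
Proof.
apply: leq_trans (_ : #|fch @: setX (W v) [set: 'I_3]| <= _); last first.
  by apply: leq_trans (leq_imset_card _ _) _; rewrite cardsX cardsT card_ord.
apply: subset_leq_card; apply/subsetP => a; rewrite /A inE => Ha.
case: (posnP (d a)) => Hda.
  apply/imsetP; exists (a, ord0); first by rewrite inE /W inE -{1}(par0 Hda) Ha inE.
  by [].
have Hch : a \in children e r (par a).
  have /andP[H1 /eqP H2] := par_pos Hda.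
  by rewrite /children inE esym H1 H2 eqxx.
have Hi : (index a (enum (children e r (par a)))).+1 < 3.
  have H := Hbin (par a); rewrite cardE in H.
  rewrite -mem_enum -index_mem in Hch; rewrite ltnS; exact: leq_trans Hch H.
apply/imsetP; exists (par a, Ordinal Hi); first by rewrite inE /W inE Ha inE.
by rewrite /fch /= nth_index // mem_enum.
Qed.

Definition Sys := [set Z u | u : T] :|: [set Y ak.1 ak.2 | ak : (T * 'I_D.+2)%type].

Lemma cat_card v : #|Defs.cat Sys v| <= D.+1 + D.+1 * 3 * D.+2.
Proof.
apply: leq_trans (_ : #|Z @: W v :|: (fun ak : T * 'I_D.+2 => Y ak.1 ak.2) @: setX (A v) [set: 'I_D.+2]| <= _).
  apply: subset_leq_card; apply/subsetP => C; rewrite /Defs.cat inE => /andP[].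
  rewrite /Sys inE => /orP[] /imsetP[x _ ->] Hv; rewrite inE.
    by apply/orP; left; apply/imsetP; exists x => //; rewrite /W inE; rewrite /Z inE in Hv.
  apply/orP; right; apply/imsetP; exists x => //.
  rewrite inE /A inE; rewrite /Y inE in Hv; case/andP: Hv => -> _; by rewrite in_setT.
apply: leq_trans (leq_card_setU _ _) _.
apply: leq_add; first by apply: leq_trans (leq_imset_card _ _) (W_card v).
apply: leq_trans (leq_imset_card _ _) _; rewrite cardsX cardsT card_ord leq_mul2r.
by apply/orP; right; apply: leq_trans (A_card v) _; rewrite leq_mul2r W_card orbT.
Qed.

End Count.
End Aux.

Theorem lemma5 :
  exists c : nat, forall (T : finType) (e : rel T), binary_tree e ->
    exists S : {set {set T}},
      [/\ shattered e S, internally_connected e S & memdim S <= c * (diam e) ^ 2].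
Proof.
exists 20 => T e [[[esym _] econn _] [r Hbin]].
have HD : forall x, dist e r x <= diam e.
  move=> x; rewrite /diam.
  apply: leq_trans (leq_bigmax (F := fun y => dist e r y) x) _.
  exact: (leq_bigmax (F := fun x => \max_(y : T) dist e x y) r).
case: (posnP (diam e)) => HD0.
  exists set0; split.
  - move=> s t Hne; exfalso; move: Hne.
    have Hs : dist e r s = 0 by have := HD s; rewrite HD0; lia.
    have Ht : dist e r t = 0 by have := HD t; rewrite HD0; lia.
    by rewrite (d0 econn Hs) (d0 econn Ht) eqxx.
  - by move=> C; rewrite inE.
  - apply/bigmax_leqP => u _.
    have -> : Defs.cat set0 u = set0 by apply/setP => C; rewrite !inE.
    by rewrite cards0.
exists (Sys e r (diam e)); split.
- move=> s t Hne; case: (boolP (anc e r s t)) => Ha.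
    have [u [H1 H2 H3 H4]] := shatA esym econn Ha Hne.
    exists u, (Z e r u); split => //; first by rewrite /nbhd inE.
    by rewrite /Sys inE; apply/orP; left; apply/imsetP; exists u.
  have [He [a [H1 H2 H3]]] := shatB esym econn Ha.
  exists (par e r s), (Y e r a (dist e r s)); split => //; first by rewrite /nbhd inE.
  have Hlt : dist e r s < (diam e).+2 by have := HD s; lia.
  rewrite /Sys inE; apply/orP; right; apply/imsetP; by exists (a, Ordinal Hlt).
- move=> C; rewrite /Sys inE => /orP[] /imsetP[x _ ->].
    exact: Z_conn.
  exact: Y_conn.
- apply/bigmax_leqP => v _.
  apply: leq_trans (cat_card esym econn Hbin HD v) _.
  nia.
Qed.
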